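(* Let $f,g:\mathbb{N}\to\mathbb{C}$ be functions, neither identically zero, such that \[ g(n)=\sum_{k=1}^{n}\binom{n-1}{k-1} f(k)\quad\text{for all } n\in\mathbb{N}. \] Then at least one of $\{n: f(n)\neq 0\}$ and $\{n: g(n)\neq 0\}$ is infinite. *)

(* Defs.v *)
From HB Require Import structures.
From mathcomp Require Import all_boot all_order all_algebra.
From mathcomp Require Import complex.
From mathcomp Require Import boolp classical_sets cardinality reals.

(* Main.v *)
Require Import Defs.
From HB Require Import structures.
From mathcomp Require Import all_boot all_order all_algebra.
From mathcomp Require Import complex.
From mathcomp Require Import boolp classical_sets cardinality reals.
From mathcomp Require finmap.
Import GRing.Theory Num.Theory.
Local Open Scope ring_scope.
Local Open Scope classical_set_scope.

Lemma seq_bound (s : seq nat) : exists B, forall x, x \in s -> (x < B)%N.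
Proof.
elim: s => [|a s [B HB]]; first by exists 0%N.
exists (maxn a.+1 B) => x; rewrite inE => /orP [/eqP ->|/HB h].
  by rewrite leq_max leqnn.
by rewrite leq_max h orbT.
Qed.

Lemma finite_bound (A : set nat) : finite_set A -> exists B, forall x, A x -> (x < B)%N.
Proof.
move=> /finite_fsetP [X ->].
have [B HB] := seq_bound (finmap.enum_fset X).
by exists B => x /= Hx; apply: HB.
Qed.

Section T.
Variable C : comNzRingType.

Definition T (a : nat -> C) (m : nat) := \sum_(j < m.+1) ('C(m, j))%:R * a j.

Lemma T_diff a m : T a m.+1 = T a m + T (fun j => a j.+1) m.
Proof.
rewrite /T big_ord_recl [X in _ = X + _]big_ord_recl !bin0.
under eq_bigr => i _ do rewrite /= binS natrD mulrDl.
rewrite big_split /= -!addrA; congr (_ + _); congr (_ + _).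
rewrite big_ord_recr /= bin_small // mul0r addr0.
by apply: eq_bigr => i _; rewrite /=.
Qed.

Lemma T_nonvanish d : forall a : nat -> C, (forall j, (d < j)%N -> a j = 0) -> a d != 0 ->
  ~ (exists M, forall m, (M <= m)%N -> T a m = 0).
Proof.
elim: d => [|d IH] a ha hd [M HM].
  have := HM M (leqnn M); rewrite /T big_ord_recl bin0 big1 ?addr0 ?mul1r.
    by move=> h; rewrite h eqxx in hd.
  by move=> i _; rewrite ha ?mulr0.
apply: (IH (fun j => a j.+1)) => //.
  by move=> j hj; rewrite ha.
exists M => m hm.
have := T_diff a m; rewrite HM ?HM ?add0r //; last exact: leqW.
Qed.
End T.

Theorem proposition5p1 (R : realType) (f g : nat -> R[i])
  (hf : exists n : nat, (0 < n)%N /\ f n != 0)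
  (hg : exists n : nat, (0 < n)%N /\ g n != 0)
  (hfg : forall n : nat, (0 < n)%N ->
     g n = \sum_(1 <= k < n.+1) ('C(n.-1, k.-1))%:R * f k) :
  ~ finite_set [set n : nat | (0 < n)%N /\ f n != 0] \/
  ~ finite_set [set n : nat | (0 < n)%N /\ g n != 0].
Proof.
have [fin|] := pselect (finite_set [set n : nat | (0 < n)%N /\ f n != 0]); last by left.
right => ging.
have [B HB] := finite_bound _ fin.
have exP : exists n, (0 < n)%N && (f n != 0).
  by case: hf => n [h1 h2]; exists n; rewrite h1.
have boundP : forall n, (0 < n)%N && (f n != 0) -> (n <= B)%N.
  by move=> n /andP [h1 h2]; apply: ltnW; apply: HB.
case: (ex_maxnP exP boundP) => d /andP [d0 fd] dmax.
have [B' HB'] := finite_bound _ ging.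
apply: (@T_nonvanish _ d.-1 (fun j => f j.+1)).
- move=> j hj; apply/eqP; apply: contraT => hfj.
  have := dmax j.+1; rewrite ltn0Sn hfj /= => /(_ isT).
  by move: hj; case: d d0 {fd dmax} => // d _ /= ; rewrite ltnNge => /negP; auto.
- by rewrite prednK.
exists B' => m hm.
have -> : T _ (fun j => f j.+1) m = g m.+1.
  rewrite hfg // /T big_add1 /= big_mkord; apply: eq_bigr => i _ //.
apply/eqP; apply: contraT => gm.
have := HB' m.+1 (conj isT gm).
by rewrite ltnNge (leqW hm).
Qed.
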